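(* Let $\kappa$ be a regular cardinal and $\lambda\le\kappa$. If $(T,L)$ is a good labelled $(\kappa,\lambda)$-tree, then $(T,L)$ is a $(\kappa,\lambda)$-Borel$^*$-code.
   Context: Basic $\kappa$-open sets: $N_\eta=\{\zeta\in\kappa^\kappa\mid\eta\subseteq\zeta\}$ for $\eta:X\to\kappa$, $X\subseteq\kappa$, $|X|<\kappa$, and $\emptyset$; in $\kappa^\kappa\times\kappa^\kappa$ they are products $N_\eta\times N_\xi$. A set is $\kappa$-open if it is a union of at most $\kappa$ basic $\kappa$-open sets, $\kappa$-closed if its complement is $\kappa$-open; $\kappa$-Borel sets form the smallest class containing the basic $\kappa$-open sets closed under complements and unions and intersections of at most $\kappa$ sets. A good labelled $(\kappa,\lambda)$-tree is a pair $(T,L)$ where $T$ is a (rooted) tree without branches of length $\kappa$, every element of $T$ has at most $\kappa$ immediate successors, $|T|\le\lambda$, every increasing sequence in $T$ has a supremum in $T$, $L(t)\in\{\bigcup,\bigcap\}$ for every non-leaf $t$, and $L(t)$ is a basic $\kappa$-open set for every leaf $t$. Borel$^*$-game $GB(\xi,(T,L))$ for $\xi\in\kappa^\kappa$: the play starts at the root; at a non-leaf node $t$, player II chooses an immediate successor if $L(t)=\bigcup$ and player I chooses one if $L(t)=\bigcap$; at limit stages the play moves to the supremum of the nodes chosen so far; the play ends at a leaf $t$ and II wins iff $\xi\in L(t)$. $(T,L)$ is a $(\kappa,\lambda)$-Borel$^*$-code if it is a good labelled $(\kappa,\lambda)$-tree and there is a function $\pi$ such that: (i) $\mathrm{dom}(\pi)$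 is a $\kappa$-closed subset of $\kappa^\kappa$ and each $\pi(\eta)$ is a strategy of II in the Borel$^*$-game on $(T,L)$; (ii) for every $\xi\in\kappa^\kappa$, if II has a winning strategy in $GB(\xi,(T,L))$ then $\pi(\eta)$ is a winning strategy of II in $GB(\xi,(T,L))$ for some $\eta\in\mathrm{dom}(\pi)$; (iii) the set $\{(\xi,\eta)\mid\eta\in\mathrm{dom}(\pi)$ and $\pi(\eta)$ is a winning strategy of II in $GB(\xi,(T,L))\}$ is $\kappa$-Borel. *)

(* Defs.v *)
Set Implicit Arguments.

Definition injective {A B : Type} (f : A -> B) : Prop :=
  forall x y, f x = f y -> x = y.

Definition card_le (A B : Type) : Prop := exists f : A -> B, injective f.

Section Kappa.
Variable K : Type.              (* the cardinal kappa, as a set of ordinals *)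
Variable ltK : K -> K -> Prop.

Definition small (X : K -> Prop) : Prop :=
  ~ card_le K {x : K | X x}.

(* (K, ltK) is (the von Neumann ordinal of) a regular cardinal: a strict
   well-order, every proper initial segment has smaller cardinality
   (initial ordinal), infinite, and every subset of size < kappa is bounded. *)
Definition regular_cardinal : Prop :=
  (forall a, ~ ltK a a) /\
  (forall a b c, ltK a b -> ltK b c -> ltK a c) /\
  (forall a b, a = b \/ ltK a b \/ ltK b a) /\
  well_founded ltK /\
  (forall a, ~ card_le K {b : K | ltK b a}) /\
  card_le nat K /\
  (forall S : K -> Prop, small S -> exists a, forall s, S s -> ltK s a).

(* kappa^kappa = K -> K.  A partial function eta : X -> kappa, X subset kappa,
   is coded by eta : K -> option K with domain {a | eta a <> None}. *)
Definition dom (eta : K -> option K) : K -> Prop := fun a => eta a <> None.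

Definition N (eta : K -> option K) : (K -> K) -> Prop :=
  fun zeta => forall a b, eta a = Some b -> zeta a = b.

Definition basic_open (A : (K -> K) -> Prop) : Prop :=
  (forall x, ~ A x) \/
  (exists eta, small (dom eta) /\ forall x, A x <-> N eta x).

Definition kopen (A : (K -> K) -> Prop) : Prop :=
  exists (I : Type) (B : I -> (K -> K) -> Prop),
    card_le I K /\ (forall i, basic_open (B i)) /\
    (forall x, A x <-> exists i, B i x).

Definition kclosed (A : (K -> K) -> Prop) : Prop :=
  kopen (fun x => ~ A x).

Definition basic_open2 (P : (K -> K) * (K -> K) -> Prop) : Prop :=
  exists A B, basic_open A /\ basic_open B /\
    forall p, P p <-> (A (fst p) /\ B (snd p)).

Inductive kBorel2 : ((K -> K) * (K -> K) -> Prop) -> Prop :=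
| kB_basic P : basic_open2 P -> kBorel2 P
| kB_compl P Q : kBorel2 P -> (forall p, Q p <-> ~ P p) -> kBorel2 Q
| kB_union (I : Type) (F : I -> (K -> K) * (K -> K) -> Prop) Q :
    card_le I K -> (forall i, kBorel2 (F i)) ->
    (forall p, Q p <-> exists i, F i p) -> kBorel2 Q
| kB_inter (I : Type) (F : I -> (K -> K) * (K -> K) -> Prop) Q :
    card_le I K -> (forall i, kBorel2 (F i)) ->
    (forall p, Q p <-> forall i, F i p) -> kBorel2 Q.

Inductive label : Type :=
| LUnion : label
| LInter : label
| LOpen : ((K -> K) -> Prop) -> label.

Section Tree.
Variable T : Type.
Variable ltT : T -> T -> Prop.
Variable L : T -> label.

Definition leT (s t : T) : Prop := s = t \/ ltT s t.

Definition is_chain (C : T -> Prop) : Prop :=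
  forall a b, C a -> C b -> a = b \/ ltT a b \/ ltT b a.

Definition is_tree : Prop :=
  (forall t, ~ ltT t t) /\
  (forall a b c, ltT a b -> ltT b c -> ltT a c) /\
  (exists r, forall t, leT r t) /\
  (forall t, is_chain (fun s => ltT s t)) /\
  (forall t (S : T -> Prop), (exists s, S s /\ ltT s t) ->
     exists m, S m /\ ltT m t /\ forall s, S s -> ltT s t -> leT m s).

Definition leaf (t : T) : Prop := forall u, ~ ltT t u.

Definition immsucc (s u : T) : Prop :=
  ltT s u /\ forall v, ~ (ltT s v /\ ltT v u).

Definition good_labelled_tree (Lam : Type) : Prop :=
  is_tree /\
  (~ exists f : K -> T, forall a b, ltK a b -> ltT (f a) (f b)) /\
  (forall t, card_le {u : T | immsucc t u} K) /\
  card_le T Lam /\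
  (forall C, is_chain C ->
     exists s, (forall c, C c -> leT c s) /\
               (forall u, (forall c, C c -> leT c u) -> leT s u)) /\
  (forall t, ~ leaf t -> L t = LUnion \/ L t = LInter) /\
  (forall t, leaf t -> exists A, L t = LOpen A /\ basic_open A).

(* A strategy of II: at each non-leaf node labelled \bigcup it picks an
   immediate successor.  (In a tree the history of a play reaching t is
   the set of predecessors of t, so this is a function of the history.) *)
Definition strategyII (sigma : T -> T) : Prop :=
  forall t, ~ leaf t -> L t = LUnion -> immsucc t (sigma t).

(* The set of positions visited by a play: a branch (maximal downward
   closed chain). *)
Definition branch (P : T -> Prop) : Prop :=
  is_chain P /\ (exists t, P t) /\
  (forall a b, P b -> ltT a b -> P a) /\
  (forall Q, is_chain Q -> (forall a b, Q b -> ltT a b -> Q a) ->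
     (forall t, P t -> Q t) -> forall t, Q t -> P t).

Definition follows (sigma : T -> T) (P : T -> Prop) : Prop :=
  forall t, P t -> ~ leaf t -> L t = LUnion -> P (sigma t).

Definition II_wins_play (xi : K -> K) (P : T -> Prop) : Prop :=
  exists t A, P t /\ leaf t /\ L t = LOpen A /\ A xi.

Definition winning_II (xi : K -> K) (sigma : T -> T) : Prop :=
  strategyII sigma /\
  forall P, branch P -> follows sigma P -> II_wins_play xi P.

Definition borel_star_code (Lam : Type) : Prop :=
  good_labelled_tree Lam /\
  exists (D : (K -> K) -> Prop) (pi : (K -> K) -> T -> T),
    kclosed D /\
    (forall eta, D eta -> strategyII (pi eta)) /\
    (forall xi, (exists sigma, winning_II xi sigma) ->
       exists eta, D eta /\ winning_II xi (pi eta)) /\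
    kBorel2 (fun p => D (snd p) /\ winning_II (fst p) (pi (snd p))).

End Tree.
End Kappa.

(* Main.v *)
Require Import Defs.
From Stdlib Require Import Classical ClassicalEpsilon ProofIrrelevance.
Set Implicit Arguments.

Definition Reach (K T : Type) (ltT : T -> T -> Prop) (L : T -> label K)
  (sg : T -> T) (t : T) : Prop :=
  forall s, ltT s t -> ~ leaf ltT s -> L s = LUnion K -> leT ltT (sg s) t.

Lemma down_chain (T : Type) (ltT : T -> T -> Prop) :
  is_tree ltT -> forall t, is_chain ltT (fun x => leT ltT x t).
Proof.
  intros [irr [tr [_ [ch _]]]] t a b [Ha|Ha] [Hb|Hb]; subst.
  - left; reflexivity.
  - right; right; exact Hb.
  - right; left; exact Ha.
  - apply (ch t a b Ha Hb).
Qed.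

Lemma char (K T : Type) (ltT : T -> T -> Prop) (L : T -> label K)
  (sg : T -> T) (xi : K -> K) :
  is_tree ltT ->
  (forall C, is_chain ltT C ->
     exists s, (forall c, C c -> leT ltT c s) /\
               (forall u, (forall c, C c -> leT ltT c u) -> leT ltT s u)) ->
  ((forall P, branch ltT P -> follows ltT L sg P -> II_wins_play ltT L xi P) <->
   (forall t, leaf ltT t -> Reach ltT L sg t -> exists A, L t = LOpen A /\ A xi)).
Proof.
  intros Htree Hsup.
  pose proof Htree as [irr [tr [_ [ch _]]]].
  assert (Hdc : forall t a b, leT ltT b t -> ltT a b -> leT ltT a t).
  { intros t a b [->|Hb] Hab; right; auto. eapply tr; eauto. }
  split.
  - intros H t Hl Hr.
    destruct (H (fun x => leT ltT x t)) as [t' [A [Ht' [Hl' [HL HA]]]]].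
    + split; [apply down_chain; auto|].
      split; [exists t; left; reflexivity|].
      split; [intros a b Hb Hab; eapply Hdc; eauto|].
      intros Q HQc HQd HPQ q Hq.
      assert (Qt : Q t) by (apply HPQ; left; reflexivity).
      destruct (HQc q t Hq Qt) as [->|[H1|H1]].
      * left; reflexivity.
      * right; exact H1.
      * exfalso; exact (Hl q H1).
    + intros s [->|Hs] Hnl Hu.
      * exfalso; exact (Hnl Hl).
      * apply Hr; auto.
    + destruct Ht' as [->|Ht'].
      * exists A; auto.
      * exfalso; exact (Hl' t Ht').
  - intros H P [Pc [Pne [Pd Pmax]]] Hf.
    destruct (Hsup P Pc) as [s [Hub _]].
    assert (Ps : P s).
    { apply (Pmax (fun x => leT ltT x s)); auto.
      - apply down_chain; auto.
      - intros a b Hb Hab; eapply Hdc; eauto.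
      - left; reflexivity. }
    assert (Hls : leaf ltT s).
    { intros u Hu.
      assert (Pu : P u).
      { apply (Pmax (fun x => leT ltT x u)); auto.
        - apply down_chain; auto.
        - intros a b Hb Hab; eapply Hdc; eauto.
        - intros p Hp. destruct (Hub p Hp) as [->|H1]; right; auto.
          eapply tr; eauto.
        - left; reflexivity. }
      destruct (Hub u Pu) as [->|H1].
      + exact (irr _ Hu).
      + exact (irr s (tr _ _ _ Hu H1)). }
    destruct (H s Hls) as [A [HL HA]].
    + intros s' Hs' Hnl Hu.
      apply Hub. apply Hf; auto. apply (Pd s' s Ps Hs').
    + exists s, A; auto.
Qed.

Lemma borel_ext (K : Type) (P Q : (K -> K) * (K -> K) -> Prop) :
  kBorel2 P -> (forall p, P p <-> Q p) -> kBorel2 Q.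
Proof.
  intros HP He.
  apply (@kB_compl K (fun p => ~ P p) Q (@kB_compl K P (fun p => ~ P p) HP (fun p => iff_refl _))).
  intro p. rewrite <- He. split; [intros H1 H2; exact (H2 H1)|].
  intros H; apply NNPP; exact H.
Qed.

Lemma small_sub1 (K : Type) (S : K -> Prop) (a : K) :
  card_le nat K -> (forall x, S x -> x = a) -> small S.
Proof.
  intros [g Hg] HS [h Hh].
  assert (E : h (g 0) = h (g 1)).
  { destruct (h (g 0)) as [x Hx], (h (g 1)) as [y Hy].
    assert (x = y) by (rewrite (HS x Hx), (HS y Hy); reflexivity). subst.
    f_equal; apply proof_irrelevance. }
  apply Hh, Hg in E. discriminate.
Qed.

Lemma basic_full (K : Type) : card_le nat K -> basic_open (fun _ : K -> K => True).
Proof.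
  intros Hn. destruct Hn as [g Hg] eqn:E. right. exists (fun _ => None). split.
  - apply (@small_sub1 _ _ (g 0) Hn). intros x Hx. exfalso; apply Hx; reflexivity.
  - intros x; split; auto. intros _ a b Hb; discriminate.
Qed.

Lemma borel_fstA (K : Type) (A : (K -> K) -> Prop) :
  card_le nat K -> basic_open A -> kBorel2 (fun p => A (fst p)).
Proof.
  intros Hn HA. apply kB_basic. exists A, (fun _ => True).
  split; auto. split; [apply basic_full; auto|]. intuition.
Qed.

Lemma borel_true (K : Type) : card_le nat K -> kBorel2 (fun _ : (K -> K) * (K -> K) => True).
Proof.
  intros Hn. apply kB_basic. exists (fun _ => True), (fun _ => True).
  split; [apply basic_full; auto|]. split; [apply basic_full; auto|]. intuition.
Qed.

Lemma basic_pt (K : Type) (a k : K) :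
  card_le nat K -> basic_open (fun z : K -> K => z a = k).
Proof.
  intros Hn. right.
  exists (fun x => if excluded_middle_informative (x = a) then Some k else None).
  split.
  - apply (@small_sub1 _ _ a Hn). intros x Hx. unfold dom in Hx.
    destruct (excluded_middle_informative (x = a)); auto. congruence.
  - intros z; split.
    + intros H x b Hb. destruct (excluded_middle_informative (x = a)); congruence.
    + intros H. apply H. destruct (excluded_middle_informative (a = a)); congruence.
Qed.

Lemma borel_coord (K : Type) (a : K) (X : K -> Prop) :
  card_le nat K -> kBorel2 (fun p : (K -> K) * (K -> K) => X (snd p a)).
Proof.
  intros Hn.
  apply (@kB_union K {k | X k} (fun i p => snd p a = proj1_sig i)).
  - exists (@proj1_sig _ _). intros [x Hx] [y Hy] E; simpl in E; subst.
    f_equal; apply proof_irrelevance.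
  - intros [k Hk]. apply kB_basic. exists (fun _ => True), (fun z => z a = k).
    split; [apply basic_full; auto|]. split; [apply basic_pt; auto|]. simpl; intuition.
  - intros p; split.
    + intros H. exists (exist _ _ H). reflexivity.
    + intros [[k Hk] E]. simpl in E. rewrite E. exact Hk.
Qed.

Theorem lemma3p4 (K : Type) (ltK : K -> K -> Prop) (Lam : Type)
  (T : Type) (ltT : T -> T -> Prop) (L : T -> label K) :
  regular_cardinal ltK ->
  card_le Lam K ->
  good_labelled_tree ltK ltT L Lam ->
  borel_star_code ltK ltT L Lam.
Proof.
  intros Hreg [fl Hfl] Hgood.
  split; [exact Hgood|].
  pose proof Hgood as [Htree [_ [_ [[fT HfT] [Hsup [_ Hleaf]]]]]].
  pose proof Hreg as [_ [_ [_ [_ [_ [Hn _]]]]]].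
  pose proof Htree as [irr [tr [[r _] [ch Hmin]]]].
  set (f := fun t => fl (fT t)).
  assert (Hf : forall x y, f x = f y -> x = y) by (intros x y E; apply HfT, Hfl, E).
  assert (HfK : card_le T K) by (exists f; exact Hf).
  assert (Himm : forall s u, ltT s u -> exists v, immsucc ltT s v).
  { intros s u Hsu.
    destruct (classic (exists v, ltT s v /\ ltT v u)) as [[v [H1 H2]]|Hno].
    - destruct (Hmin u (fun x => ltT s x) (ex_intro _ v (conj H1 H2)))
        as [m [Hm1 [Hm2 Hm3]]].
      exists m. split; auto. intros w [Hw1 Hw2].
      destruct (Hm3 w Hw1 (tr _ _ _ Hw2 Hm2)) as [->|H3].
      + exact (irr _ Hw2).
      + exact (irr m (tr _ _ _ H3 Hw2)).
    - exists u. split; auto. intros v Hv; apply Hno; exists v; exact Hv. }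
  set (s0 := fun s => match excluded_middle_informative (exists v, immsucc ltT s v) with
                      | left H => proj1_sig (constructive_indefinite_description _ H)
                      | right _ => s end).
  assert (Hs0 : strategyII ltT L s0).
  { intros s Hnl _. unfold s0.
    destruct (excluded_middle_informative (exists v, immsucc ltT s v)) as [H|H].
    - exact (proj2_sig (constructive_indefinite_description _ H)).
    - exfalso. apply Hnl. intros u Hu. apply H. eapply Himm; eauto. }
  set (dec := fun k => match excluded_middle_informative (exists t, f t = k) with
                       | left H => proj1_sig (constructive_indefinite_description _ H)
                       | right _ => r end).
  assert (Hdec : forall t, dec (f t) = t).
  { intros t. unfold dec.
    destruct (excluded_middle_informative (exists t', f t' = f t)) as [H|H].
    - apply Hf. exact (proj2_sig (constructive_indefinite_description _ H)).
    - exfalso; apply H; exists t; reflexivity. }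
  set (h := fun s k => if excluded_middle_informative (immsucc ltT s (dec k))
                       then dec k else s0 s).
  set (pi := fun (eta : K -> K) s => h s (eta (f s))).
  assert (Hpi : forall eta, strategyII ltT L (pi eta)).
  { intros eta s Hnl Hu. unfold pi, h.
    destruct (excluded_middle_informative (immsucc ltT s (dec (eta (f s))))); auto. }
  exists (fun _ => True), pi.
  split.
  { exists Empty_set, (fun (e : Empty_set) (_ : K -> K) => False). split.
    - exists (fun e : Empty_set => match e with end). intros [].
    - split; [intros []|]. intros x; split; [intros H; exfalso; apply H; exact I|intros [[] _]]. }
  split; [intros eta _; apply Hpi|].
  split.
  { intros xi [sg [Hsg Hw]].
    exists (fun k => f (sg (dec k))). split; [exact I|].
    split; [apply Hpi|].
    intros P HP Hfo. apply Hw; auto.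
    intros t Pt Hnl Hu.
    assert (E : pi (fun k => f (sg (dec k))) t = sg t).
    { unfold pi, h. rewrite Hdec, Hdec.
      destruct (excluded_middle_informative (immsucc ltT t (sg t))); auto.
      exfalso; auto. }
    rewrite <- E. apply Hfo; auto. }
  assert (Hb2 : card_le bool K).
  { destruct Hn as [g Hg]. exists (fun b : bool => g (if b then 1 else 0)).
    intros [|] [|] E; auto; apply Hg in E; discriminate. }
  assert (HReach : forall t, kBorel2 (fun p : (K -> K) * (K -> K) => Reach ltT L (pi (snd p)) t)).
  { intros t.
    apply (@kB_inter K T (fun s p => ltT s t -> ~ leaf ltT s -> L s = LUnion K ->
                                       leT ltT (pi (snd p) s) t)); auto.
    - intros s.
      apply (borel_coord (f s)
               (fun k => ltT s t -> ~ leaf ltT s -> L s = LUnion K -> leT ltT (h s k) t) Hn).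
    - intros p; split; intros H; exact H. }
  apply (@kB_inter K T (fun t p => leaf ltT t -> Reach ltT L (pi (snd p)) t ->
                          exists A, L t = LOpen A /\ A (fst p))); auto.
  - intros t. destruct (classic (leaf ltT t)) as [Hl|Hl].
    + destruct (Hleaf t Hl) as [A [HA HbA]].
      apply (@kB_union K bool (fun b p => if b then ~ Reach ltT L (pi (snd p)) t
                                            else A (fst p))); auto.
      * intros [|].
        -- apply (kB_compl _ (HReach t)). intros; reflexivity.
        -- apply borel_fstA; auto.
      * intros p; split.
        -- intros H. destruct (classic (Reach ltT L (pi (snd p)) t)) as [R|R].
           ++ destruct (H Hl R) as [A' [E HA']]. rewrite HA in E. injection E as <-.
              exists false; exact HA'.
           ++ exists true; exact R.
        -- intros [[|] Hb] _ R.
           ++ exfalso; auto.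
           ++ exists A; auto.
    + apply (@borel_ext _ _ _ (borel_true Hn)). intros p; split; auto.
      intros _ H; exfalso; auto.
  - intros p. simpl. split.
    + intros [_ [_ Hw]]. apply (char L (pi (snd p)) (fst p) Htree Hsup). exact Hw.
    + intros H. split; [exact I|]. split; [apply Hpi|].
      apply (char L (pi (snd p)) (fst p) Htree Hsup). exact H.
Qed.
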